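(* Let $X=\{X(t),\ t\ge 0\}$ be a stochastic process and suppose that for every $q\in\mathbb{R}$ the limit $$\tau(q)=\lim_{t\to\infty}\frac{\log \mathbb{E}|X(t)|^q}{\log t}$$ exists in $(-\infty,+\infty]$ (with $\tau(q)=+\infty$ if $\mathbb{E}|X(t)|^q=\infty$ for all large $t$). Let $\mathcal{D}_\tau=\{q\in\mathbb{R}:\tau(q)<\infty\}$. Then: (i) $\tau$ is convex. (ii) $q\mapsto \tau(q)/q$ is nondecreasing on $\mathcal{D}_\tau\setminus\{0\}$. (iii) If $\tau(q')\ge 0$ for some $q'>0$, then $\tau(q)\ge 0$ for every $q\ge q'$ and $\tau$ is nondecreasing on $\mathcal{D}_\tau\cap[q',\infty)$. In particular, if $\tau(q)\ge 0$ for every $q>0$, then $\tau$ is nondecreasing on $\mathcal{D}_\tau\cap[0,\infty)$. (iv) For every $q<0$, $$\tau(q)\ \ge\ q\,\inf_{q'>0}\frac{\tau(q')}{q'}.$$ In particular, $\tau(q)\ge -\tau(-q)$ for every $q<0$.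
   Context: $\tau$ is called the scaling function of $X$; note $\tau(0)=0$. Absolute moments of negative order $\mathbb{E}|X(t)|^q$, $q<0$, are allowed and may be infinite. *)

(* Defs.v *)
From HB Require Import structures.
From mathcomp Require Import all_boot all_order all_algebra.
From mathcomp Require Import all_classical all_reals all_analysis.
Set Implicit Arguments. Unset Strict Implicit. Unset Printing Implicit Defensive.
Import Order.TTheory GRing.Theory Num.Theory.
Local Open Scope classical_set_scope.
Local Open Scope ring_scope.

(* |x|^q as an extended real: 0^q = +oo for q < 0, 0^0 = 1, 0^q = 0 for q > 0. *)
Definition abspow {R : realType} (x q : R) : \bar R :=
  if (x == 0) && (q < 0) then +oo%E else (`|x| `^ q)%:E.

Definition logE {R : realType} (x : \bar R) : \bar R :=
  match x with
  | EFin r => if r == 0 then -oo%E else (ln r)%:E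
  | +oo%E => +oo%E
  | -oo%E => -oo%E
  end.

Definition absmoment {d : measure_display} {T : measurableType d} {R : realType}
  (P : probability T R) (X : R -> T -> R) (t q : R) : \bar R :=
  (\int[P]_w abspow (X t w) q)%E.

Definition scaling_ratio {d : measure_display} {T : measurableType d} {R : realType}
  (P : probability T R) (X : R -> T -> R) (q t : R) : \bar R :=
  (logE (absmoment P X t q) * ((ln t)^-1)%:E)%E.

(* Main.v *)
Require Import Defs.
From HB Require Import structures.
From mathcomp Require Import all_boot all_order all_algebra.
From mathcomp Require Import all_classical all_reals all_analysis.
From mathcomp Require Import measurable_realfun ring lra.
Import Order.TTheory GRing.Theory Num.Theory.
Local Open Scope classical_set_scope.
Local Open Scope ring_scope.

Section Helpers.
Context {R : realType}.

Lemma amgm (a b l : R) : 0 <= a -> 0 <= b -> 0 < l -> l < 1 ->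
  a `^ l * b `^ (1 - l) <= l * a + (1 - l) * b.
Proof.
move=> a0 b0 l0 l1.
have l0' : 0 < 1 - l by rewrite subr_gt0.
have := @conjugate_powR R (a `^ l) (b `^ (1 - l)) l^-1 (1 - l)^-1
  (powR_ge0 _ _) (powR_ge0 _ _) (ltac:(by rewrite invr_gt0)) (ltac:(by rewrite invr_gt0)).
rewrite !invrK => /(_ (subrKC _ _)).
by rewrite -!powRrM !mulfV ?gt_eqF// !powRr1// [_ * l]mulrC [_ * (1 - l)]mulrC.
Qed.

Lemma measurable_abspow (q : R) : measurable_fun [set: R] (fun x : R => abspow x q).
Proof.
rewrite /abspow; apply: measurable_fun_ifT.
- apply: (@measurable_and _ _ _ (fun x : R => x == 0) (fun _ => q < 0)); last exact: measurable_cst.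
  exact: measurable_fun_eqr.
- exact: measurable_cst.
- apply: measurableT_comp => //.
  apply: (measurableT_comp (measurable_powR q)).
  exact: normr_measurable.
Qed.

Lemma abspow_ge0 (x q : R) : (0 <= abspow x q)%E.
Proof. by rewrite /abspow; case: ifP => // _; rewrite lee_fin powR_ge0. Qed.


Lemma RL (u v w A B l : R) : 0 <= u -> 0 <= v -> 0 < A -> 0 < B -> 0 < l -> l < 1 ->
  w <= u `^ l * v `^ (1 - l) ->
  w <= A `^ l * B `^ (1 - l) * (l / A * u + (1 - l) / B * v).
Proof.
move=> u0 v0 A0 B0 l0 l1 Hw; apply: le_trans Hw _.
have e1 : l / A * u = l * (u / A) by rewrite mulrAC -mulrA.
have e2 : (1 - l) / B * v = (1 - l) * (v / B) by rewrite mulrAC -mulrA.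
rewrite e1 e2.
have ha : 0 <= u / A by rewrite divr_ge0// ltW.
have hb : 0 <= v / B by rewrite divr_ge0// ltW.
have {1}-> : u = A * (u / A) by rewrite mulrCA divff ?gt_eqF// mulr1.
have {1}-> : v = B * (v / B) by rewrite mulrCA divff ?gt_eqF// mulr1.
move: ha hb; set a := u / A; set b := v / B => ha hb.
rewrite (powRM _ (ltW A0) ha) (powRM _ (ltW B0) hb).
rewrite mulrACA ler_wpM2l ?mulr_ge0 ?powR_ge0//.
exact: amgm.
Qed.

Lemma PW (x q1 q2 l A B : R) : 0 < A -> 0 < B -> 0 < l -> l < 1 ->
  (abspow x (l * q1 + (1 - l) * q2) <= (A `^ l * B `^ (1 - l))%:E *
     ((l / A)%:E * abspow x q1 + ((1 - l) / B)%:E * abspow x q2))%E.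
Proof.
move=> A0 B0 l0 l1.
have l0' : 0 < 1 - l by rewrite subr_gt0.
have C0 : 0 < A `^ l * B `^ (1 - l) by rewrite mulr_gt0 ?powR_gt0.
have nNy (y : \bar R) : (0 <= y)%E -> y != -oo%E by case: y.
have [->|x0] := eqVneq x 0.
  have [q1n|q1p] := ltP q1 0.
    rewrite [abspow 0 q1]/abspow eqxx q1n /= gt0_muley ?lte_fin ?divr_gt0//.
    rewrite addye ?gt0_muley ?leey//; apply: nNy.
    by rewrite mule_ge0// ?abspow_ge0// lee_fin ltW// divr_gt0.
  have [q2n|q2p] := ltP q2 0.
    rewrite [abspow 0 q2]/abspow eqxx q2n /= [X in (_ + X)%E]gt0_muley ?lte_fin ?divr_gt0//.
    rewrite addey ?gt0_muley ?leey//; apply: nNy.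
    by rewrite mule_ge0// ?abspow_ge0// lee_fin ltW// divr_gt0.
  have qp : 0 <= l * q1 + (1 - l) * q2 by rewrite addr_ge0// mulr_ge0// ltW.
  rewrite /abspow eqxx /= !ltNge q1p q2p qp /= .
  rewrite -(EFinM (l / A)) -(EFinM ((1 - l) / B)) -EFinD -EFinM lee_fin.
  apply: RL; rewrite ?powR_ge0//.
  rewrite normr0.
  have [q10|q10] := eqVneq q1 0; have [q20|q20] := eqVneq q2 0.
  - by rewrite q10 q20 !mulr0 addr0 !powRr0 powR1 mulr1.
  1-3: suff qpos : 0 < l * q1 + (1 - l) * q2.
  all: try (apply: (le_trans _ (mulr_ge0 (powR_ge0 _ _) (powR_ge0 _ _)));
    rewrite le_eqVlt; apply/orP; left; apply/eqP; apply: powR0; exact: lt0r_neq0).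
  - by rewrite q10 mulr0 add0r mulr_gt0// lt_neqAle eq_sym q20.
  - by rewrite q20 mulr0 addr0 mulr_gt0// lt_neqAle eq_sym q10.
  - by apply: addr_gt0; rewrite mulr_gt0// lt_neqAle eq_sym ?q10 ?q20.
rewrite /abspow (negbTE x0) /= -(EFinM (l / A)) -(EFinM ((1 - l) / B)) -EFinD -EFinM lee_fin.
apply: RL; rewrite ?powR_ge0//.
rewrite powRD; last by rewrite normr_eq0 x0 implybT.
by rewrite [l * _]mulrC [_ * q2]mulrC !powRrM.
Qed.

End Helpers.

Section Holder.
Context d (T : measurableType d) (R : realType) (mu : {measure set T -> \bar R}).
Local Open Scope ereal_scope.

Lemma mabs (f : T -> R) (q : R) : measurable_fun setT f ->
  measurable_fun setT (fun w => abspow (f w) q).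
Proof. by move=> mf; exact: (measurableT_comp (measurable_abspow q) mf). Qed.

Lemma holder_moment (f : T -> R) (q1 q2 l A B : R) : measurable_fun setT f ->
  (0 < A)%R -> (0 < B)%R -> (0 < l)%R -> (l < 1)%R ->
  \int[mu]_w abspow (f w) q1 = A%:E -> \int[mu]_w abspow (f w) q2 = B%:E ->
  \int[mu]_w abspow (f w) (l * q1 + (1 - l) * q2) <= (A `^ l * B `^ (1 - l))%:E.
Proof.
move=> mf A0 B0 l0 l1 hA hB.
have l0' : (0 < 1 - l)%R by rewrite subr_gt0.
have C0 : (0 < A `^ l * B `^ (1 - l))%R by rewrite mulr_gt0 ?powR_gt0.
have ge0 (x q : R) : 0 <= abspow x q by exact: abspow_ge0.
apply: le_trans.
  apply: (@ge0_le_integral _ _ _ mu setT measurableT _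
    (fun w => (A `^ l * B `^ (1 - l))%:E *
     ((l / A)%:E * abspow (f w) q1 + ((1 - l) / B)%:E * abspow (f w) q2))).
  - by move=> *; exact: ge0.
  - exact: mabs.
  - apply: measurable_funeM; apply: emeasurable_funD; apply: measurable_funeM; exact: mabs.
  - by move=> w _; exact: PW.
rewrite ge0_integralZl//; last 3 first.
- apply: emeasurable_funD; apply: measurable_funeM; exact: mabs.
- by move=> w _; rewrite adde_ge0// mule_ge0// lee_fin ltW// divr_gt0.
- by rewrite lee_fin ltW.
rewrite ge0_integralD//; last 4 first.
- by move=> w _; rewrite mule_ge0// lee_fin ltW// divr_gt0.
- apply: measurable_funeM; exact: mabs.
- by move=> w _; rewrite mule_ge0// lee_fin ltW// divr_gt0.
- apply: measurable_funeM; exact: mabs.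
rewrite !ge0_integralZl//; try exact: mabs; try by rewrite lee_fin ltW// divr_gt0.
rewrite hA hB -(EFinM (l / A)) -(EFinM ((1 - l) / B)) -EFinD -EFinM lee_fin !divfK ?gt_eqF// subrKC mulr1.
by [].
Qed.

End Holder.

Section Aux.
Context {R : realType}.
Local Open Scope ereal_scope.

Lemma logEF (A : R) : (0 < A)%R -> logE A%:E = (ln A)%:E.
Proof. by move=> A0; rewrite /logE gt_eqF. Qed.

Lemma ratio_fin (m : \bar R) (t : R) : (1 < t)%R -> 0 <= m ->
  (logE m * ((ln t)^-1)%:E) \is a fin_num -> exists A : R, (0 < A)%R /\ m = A%:E.
Proof.
move=> t1 m0; have lt0 : (0 < (ln t)^-1)%R by rewrite invr_gt0 ln_gt0.
case: m m0 => [a| |] //= a0.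
  case: eqP => [-> | /eqP an0].
    by rewrite gt0_mulNye ?lte_fin.
  by move=> _; exists a; split => //; rewrite lt_neqAle eq_sym an0 -lee_fin.
by rewrite gt0_mulye ?lte_fin.
Qed.

Lemma logE_le (m : \bar R) (C : R) : 0 <= m -> (0 < C)%R -> m <= C%:E ->
  logE m <= (ln C)%:E.
Proof.
case: m => [a| |] //= a0 C0; rewrite ?leNye //.
rewrite lee_fin => aC; case: eqP => [_|/eqP an0]; first by rewrite leNye.
rewrite lee_fin ler_ln ?posrE //.
by rewrite lt_neqAle eq_sym an0 -lee_fin.
Qed.

End Aux.

Section Conv.
Context d (T : measurableType d) (R : realType) (P : probability T R)
  (X : R -> T -> R) (tau : R -> \bar R)
  (hX : forall t, (0 <= t)%R -> measurable_fun setT (X t))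
  (htau : forall q, tau q != -oo%E /\
            scaling_ratio P X q t @[t --> +oo] --> tau q).
Local Open Scope ereal_scope.

Lemma tau0 : tau 0 = 0.
Proof.
have h0 : scaling_ratio P X 0 t @[t --> +oo%R] --> 0.
  have -> : (fun t => scaling_ratio P X 0 t) = cst 0.
    apply/funext => t; rewrite /scaling_ratio /absmoment.
    under eq_integral do rewrite /abspow ltxx andbF powRr0.
    rewrite integral_cst// [X in logE X](_ : _ = 1); last by rewrite mul1e; exact: probability_setT.
    by rewrite logEF ?ln1 ?mul0e.
  exact: cvg_cst.
exact: (cvg_unique _ (htau 0).2 h0).
Qed.

Lemma tauZ_neq (q c : R) : (0 < c)%R -> c%:E * tau q != -oo.
Proof.
move=> c0; have := (htau q).1; case: (tau q) => [r| |] // _.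
by rewrite gt0_muley ?lte_fin.
Qed.

Lemma conv_tau (q1 q2 l : R) : (0 < l)%R -> (l < 1)%R ->
  tau (l * q1 + (1 - l) * q2)%R <= l%:E * tau q1 + (1 - l)%:E * tau q2.
Proof.
move=> l0 l1; have l0' : (0 < 1 - l)%R by rewrite subr_gt0.
have h1 := (htau q1).2; have h2 := (htau q2).2.
case E1: (tau q1) h1 => [r1| |] h1; last by move: (htau q1).1; rewrite E1.
2: by rewrite gt0_muley ?lte_fin// addye ?leey// tauZ_neq.
case E2: (tau q2) h2 => [r2| |] h2; last by move: (htau q2).1; rewrite E2.
2: by rewrite [X in _ + X]gt0_muley ?lte_fin// addey ?leey// -EFinM.
have hg : (l%:E * scaling_ratio P X q1 t + (1 - l)%:E * scaling_ratio P X q2 t)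
   @[t --> +oo%R] --> l%:E * r1%:E + (1 - l)%:E * r2%:E.
  apply: cvgeD; first by rewrite fin_num_adde_defl// -EFinM.
  - exact: cvgeZl.
  - exact: cvgeZl.
apply: (@lee_cvg_to R^o _ _ _ _ _ _ _ (htau _).2 hg).
near=> t.
have t1 : (1 < t)%R by near: t; apply: nbhs_pinfty_gt; rewrite num_real.
have f1 : scaling_ratio P X q1 t \is a fin_num by near: t; exact: (cvg_is_fine h1).
have f2 : scaling_ratio P X q2 t \is a fin_num by near: t; exact: (cvg_is_fine h2).
have mX : measurable_fun setT (X t) by apply: hX; rewrite ltW// (lt_trans ltr01).
have ge0 q : 0 <= absmoment P X t q by apply: integral_ge0 => w _; exact: abspow_ge0.
have [A [A0 eA]] := @ratio_fin R _ t t1 (ge0 q1) f1.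
have [B [B0 eB]] := @ratio_fin R _ t t1 (ge0 q2) f2.
have hM := @holder_moment _ _ _ P (X t) q1 q2 l A B mX A0 B0 l0 l1 eA eB.
have C0 : (0 < A `^ l * B `^ (1 - l))%R by rewrite mulr_gt0 ?powR_gt0.
have hL := @logE_le R _ _ (ge0 (l * q1 + (1 - l) * q2)%R) C0 hM.
have lt0 : (0 <= (ln t)^-1)%R by rewrite invr_ge0 ltW// ln_gt0.
rewrite /scaling_ratio; rewrite -/(absmoment P X t q1) -/(absmoment P X t q2) eA eB !logEF//.
apply: le_trans (lee_wpmul2r _ hL) _; first by rewrite lee_fin.
rewrite lnM ?posrE ?powR_gt0// !ln_powR -!EFinM -EFinD lee_fin.
by rewrite mulrDl !mulrA.
Unshelve. all: end_near.
Qed.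


Lemma conv3 (a b c : R) : (a < b)%R -> (b < c)%R ->
  tau b <= ((c - b) / (c - a))%:E * tau a + ((b - a) / (c - a))%:E * tau c.
Proof.
move=> ab bc; have ac : (0 < c - a)%R by rewrite subr_gt0 (lt_trans ab).
have ca0 : (c - a != 0)%R by rewrite gt_eqF.
have l0 : (0 < (c - b) / (c - a))%R by rewrite divr_gt0// subr_gt0.
have l1 : ((c - b) / (c - a) < 1)%R.
  by rewrite ltr_pdivrMr// mul1r ltrD2l ltrN2.
have e1 : (1 - (c - b) / (c - a) = (b - a) / (c - a))%R by field.
have := @conv_tau a c _ l0 l1; rewrite e1.
suff -> : ((c - b) / (c - a) * a + (b - a) / (c - a) * c)%R = b by [].
by field.
Qed.

Lemma conv3r (a b c ra rb rc : R) : (a < b)%R -> (b < c)%R ->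
  tau a = ra%:E -> tau b = rb%:E -> tau c = rc%:E ->
  (rb * (c - a) <= (c - b) * ra + (b - a) * rc)%R.
Proof.
move=> ab bc Ea Eb Ec; have ac : (0 < c - a)%R by rewrite subr_gt0 (lt_trans ab).
have := @conv3 a b c ab bc; rewrite Ea Eb Ec -!EFinM -EFinD lee_fin.
rewrite -(ler_pM2r ac) => /le_trans; apply.
by rewrite le_eqVlt; apply/orP; left; apply/eqP; field; rewrite gt_eqF.
Qed.

Lemma tau_fin_or (q : R) : (exists r, tau q = r%:E) \/ tau q = +oo.
Proof. by move: (htau q).1; case: (tau q) => [r| |] // _; [left; exists r|right]. Qed.

End Conv.

Lemma key_div {R : realType} (q1 q2 r1 r2 : R) : q1 != 0 -> q2 != 0 ->
  (forall u v, r1 = u * q1 -> r2 = v * q2 -> u <= v) -> r1 / q1 <= r2 / q2.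
Proof. by move=> n1 n2 H; apply: H; rewrite divfK. Qed.

Theorem proposition2p1 (d : measure_display) (T : measurableType d) (R : realType)
  (P : probability T R) (X : R -> T -> R) (tau : R -> \bar R)
  (hX : forall t, 0 <= t -> measurable_fun setT (X t))
  (htau : forall q, tau q != -oo%E /\
            scaling_ratio P X q t @[t --> +oo] --> tau q) :
  (* (i) convexity *)
  (forall q1 q2 l : R, (0 < l)%R && (l < 1)%R ->
     (tau (l * q1 + (1 - l) * q2)%R <= l%:E * tau q1 + (1 - l)%R%:E * tau q2)%E) /\
  (* (ii) tau(q)/q nondecreasing on D_tau \ {0} *)
  (forall q1 q2 r1 r2 : R, tau q1 = r1%:E -> tau q2 = r2%:E ->
     q1 != 0 -> q2 != 0 -> q1 <= q2 -> r1 / q1 <= r2 / q2) /\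
  (* (iii) *)
  (forall q' : R, 0 < q' -> (0 <= tau q')%E ->
     (forall q : R, q' <= q -> (0 <= tau q)%E) /\
     (forall q1 q2 : R, tau q1 != +oo%E -> tau q2 != +oo%E ->
        q' <= q1 -> q1 <= q2 -> (tau q1 <= tau q2)%E)) /\
  ((forall q : R, 0 < q -> (0 <= tau q)%E) ->
     forall q1 q2 : R, tau q1 != +oo%E -> tau q2 != +oo%E ->
        0 <= q1 -> q1 <= q2 -> (tau q1 <= tau q2)%E) /\
  (* (iv) *)
  (forall q : R, q < 0 ->
     (q%:E * ereal_inf [set (tau q' * (q'^-1)%:E)%E | q' in [set x : R | (0 < x)%R]]
        <= tau q)%E) /\
  (forall q : R, q < 0 -> (- tau (- q)%R <= tau q)%E).
Proof.
have t0 := @tau0 _ _ _ P X tau htau.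
have c3 := @conv3r _ _ _ P X tau hX htau.
have cv3 := @conv3 _ _ _ P X tau hX htau.
have tfo := @tau_fin_or _ _ _ P X tau htau.
have cv := @conv_tau _ _ _ P X tau hX htau.
have ii : forall q1 q2 r1 r2 : R, tau q1 = r1%:E -> tau q2 = r2%:E ->
     q1 != 0 -> q2 != 0 -> q1 <= q2 -> r1 / q1 <= r2 / q2.
  move=> q1 q2 r1 r2 E1 E2 n1 n2; rewrite le_eqVlt => /predU1P[e12|lt12].
    by move: E2; rewrite -e12 E1 => -[->].
  apply: key_div => // u v eu ev.
  case: (ltgtP q1 0) => [q1n|q1p|q10]; last by rewrite q10 eqxx in n1.
  - case: (ltgtP q2 0) => [q2n|q2p|q20]; last by rewrite q20 eqxx in n2.
    + have := c3 q1 q2 0 r1 r2 0 lt12 q2n E1 E2 t0.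
      have p : 0 < q1 * q2 by rewrite nmulr_rgt0.
      rewrite eu ev => H; nra.
    + have := c3 q1 0 q2 r1 0 r2 q1n q2p E1 t0 E2.
      have p : q1 * q2 < 0 by rewrite nmulr_rlt0.
      rewrite eu ev => H; nra.
  - have q2p : 0 < q2 by rewrite (lt_trans q1p).
    have := c3 0 q1 q2 0 r1 r2 q1p lt12 t0 E1 E2.
    have p : 0 < q1 * q2 by rewrite mulr_gt0.
    rewrite eu ev => H; nra.
have iiia : forall q' : R, 0 < q' -> (0 <= tau q')%E ->
    forall q : R, q' <= q -> (0 <= tau q)%E.
  move=> q' qp tq q; rewrite le_eqVlt => /predU1P[<-//|lt].
  case: (tfo q) => [[r Er]|->]; last by rewrite leey.
  have q0 : 0 < q by rewrite (lt_trans qp).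
  case: (tfo q') => [[r' Er']|Ey].
    have := c3 0 q' q 0 r' r qp lt t0 Er' Er.
    move: tq; rewrite Er Er' !lee_fin => tq H; nra.
  have := cv3 0 q' q qp lt; rewrite Ey t0 Er mule0 add0e -EFinM.
  by rewrite leye_eq.
have iiib : forall q' : R, 0 < q' -> (0 <= tau q')%E ->
     (forall q1 q2 : R, tau q1 != +oo%E -> tau q2 != +oo%E ->
        q' <= q1 -> q1 <= q2 -> (tau q1 <= tau q2)%E).
  move=> q' qp tq q1 q2 n1 n2 h1; rewrite le_eqVlt => /predU1P[<-//|lt].
  case: (tfo q1) => [[r1 E1]|Ey]; last by rewrite Ey eqxx in n1.
  case: (tfo q2) => [[r2 E2]|Ey]; last by rewrite Ey eqxx in n2.
  have q1p : 0 < q1 by rewrite (lt_le_trans qp).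
  have := iiia q' qp tq q1 h1; rewrite E1 lee_fin => r10.
  have := c3 0 q1 q2 0 r1 r2 q1p lt t0 E1 E2.
  rewrite E2 lee_fin => H; nra.
split; first by move=> q1 q2 l /andP[l0 l1]; exact: cv.
split; first exact: ii.
split; first by move=> q' qp tq; split; [exact: iiia|exact: iiib].
split.
  move=> hpos q1 q2 n1 n2; rewrite le_eqVlt => /predU1P[<-|q1p].
    move=> hq2; rewrite t0; move: hq2; rewrite le_eqVlt => /predU1P[<-|q2p]; first by rewrite t0.
    exact: hpos.
  move=> le12; apply: (iiib q1 q1p (hpos _ q1p)) => //.
split.
  move=> q qn; case: (tfo q) => [[r Er]|->]; last by rewrite leey.
  rewrite Er.
  set I := ereal_inf _.
  have lb : ((r / q)%:E <= I)%E.
    apply: le_ereal_inf_tmp => _ [q' q'p <-].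
    case: (tfo q') => [[r' Er']|->]; last by rewrite gt0_mulye ?leey// lte_fin invr_gt0.
    rewrite Er' -EFinM lee_fin.
    apply: ii => //; [by rewrite lt_eqF | by rewrite gt_eqF | by rewrite ltW// (lt_trans qn)].
  clearbody I; case: I lb => [s| |] lb.
  - rewrite -EFinM lee_fin; rewrite lee_fin in lb.
    have := ler_wnM2l (ltW qn) lb.
    by rewrite mulrCA divff ?lt_eqF// mulr1.
  - by rewrite lt0_muley ?lte_fin// leNye.
  - by move: lb; rewrite leeNy_eq.
move=> q qn; case: (tfo q) => [[r Er]|->]; last by rewrite leey.
case: (tfo (- q)) => [[s Es]|->]; last by rewrite leNye.
have := cv q (- q) 2^-1 (ltac:(by rewrite invr_gt0)) (ltac:(by rewrite invf_lt1// ltr1n)).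
rewrite (_ : 2^-1 * q + (1 - 2^-1) * - q = 0); last by field.
rewrite t0 Er Es -!EFinM -EFinD lee_fin => H.
rewrite -EFinN lee_fin; lra.
Qed.
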